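(* If a $\sigma$-structure $\mathcal{A}$ has a $\mathfrak{g}$-guarded decomposition $\tau$, then (1) every maximal $\mathfrak{g}$-guarded subset of $A$ is $\lambda(p)$ for some $p \in P_{\tau}$; and (2) every clique in the Gaifman graph of $\mathcal{A}$ is $\mathfrak{g}$-guarded.
   Context: $\mathfrak{g}$ is atom, loose or clique guarding; $\mathfrak{g}$-guarded plays are non-empty lists of $\mathfrak{g}$-guarded sets, ordered by prefix $\sqsubseteq$, with $\lambda(p)$ the last element. For a focussed play $\langle p,a\rangle$ ($a\in\lambda(p)$), $[p,a]$ is its class under $\langle p,a\rangle\sim\langle q,a'\rangle$ iff $a=a'$, $p\sqcap q$ non-empty, and $a\in\lambda(u)$ for all $u$ on the prefix-order paths from $p\sqcap q$ to $p$ and $q$. A $\mathfrak{g}$-guarded decomposition of $\mathcal{A}$ is a map $\tau$ from $A$ to plays, with image $P_\tau$, that is reflexive ($a\in\lambda(\tau(a))$), edge covering (Gaifman-adjacent $a,b$ lie in some $\lambda(p)$, $p\in P_\tau$), minimal ($[\tau(a),a]=[q,a]$ implies $\tau(a)\sqsubseteq q$) and vertex connected (for $q$ below some element of $P_\tau$ with $a\in\lambda(q)$, $[\tau(a),a]=[q,a]$). *)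

(* Defs.v *)
From Stdlib Require Import List.
Import ListNotations.
Set Implicit Arguments.

Record signature := Signature { sym : Type; arity : sym -> nat }.

Record structure (sg : signature) := Structure {
  carrier : Type;
  interp : sym sg -> list carrier -> Prop;
  interp_arity : forall s t, interp s t -> length t = @arity sg s }.

Arguments carrier {sg} _.
Arguments interp {sg} _ _ _.

Definition subset {T} (X Y : T -> Prop) := forall x, X x -> Y x.

Definition finite_set {T} (X : T -> Prop) := exists l : list T, forall x, X x -> In x l.

Section Guarded.
Variables (sg : signature) (M : structure sg).
Notation A := (carrier M).

Definition gaifman_adj (a b : A) : Prop :=
  a <> b /\ exists s t, interp M s t /\ In a t /\ In b t.

Definition gaifman_clique (X : A -> Prop) : Prop :=
  finite_set X /\ forall a b, X a -> X b -> a <> b -> gaifman_adj a b.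

Inductive guarding := AtomGuarding | LooseGuarding | CliqueGuarding.

Definition atom_guarded (X : A -> Prop) : Prop :=
  (exists s t, interp M s t /\ forall x, X x -> In x t)
  \/ (exists a, forall x, X x -> x = a).

Definition loose_guarded (X : A -> Prop) : Prop :=
  exists Y, subset X Y /\ finite_set Y /\
    forall a b, Y a -> Y b -> a <> b ->
      exists s t, interp M s t /\ In a t /\ In b t /\ forall x, In x t -> Y x.

Definition clique_guarded (X : A -> Prop) : Prop := gaifman_clique X.

Definition guarded (g : guarding) (X : A -> Prop) : Prop :=
  match g with
  | AtomGuarding => atom_guarded X
  | LooseGuarding => loose_guarded X
  | CliqueGuarding => clique_guarded X
  end.

Definition is_play (g : guarding) (p : list (A -> Prop)) : Prop :=
  p <> [] /\ forall X, In X p -> guarded g X.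

Definition prefix (p q : list (A -> Prop)) : Prop := exists r, q = p ++ r.

Definition lam (p : list (A -> Prop)) : A -> Prop := last p (fun _ => False).

Definition is_meet (p q m : list (A -> Prop)) : Prop :=
  prefix m p /\ prefix m q /\ forall r, prefix r p -> prefix r q -> prefix r m.

Definition fsim (pa qb : list (A -> Prop) * A) : Prop :=
  let (p, a) := pa in let (q, a') := qb in
  a = a' /\ exists m, is_meet p q m /\ m <> [] /\
    (forall u, prefix m u -> prefix u p -> lam u a) /\
    (forall u, prefix m u -> prefix u q -> lam u a).

Definition focussed (g : guarding) (pa : list (A -> Prop) * A) : Prop :=
  is_play g (fst pa) /\ lam (fst pa) (snd pa).

Definition fclass (g : guarding) (p : list (A -> Prop)) (a : A)
  : list (A -> Prop) * A -> Prop :=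
  fun qb => focussed g qb /\ fsim (p, a) qb.

Definition guarded_decomposition (g : guarding) (tau : A -> list (A -> Prop)) : Prop :=
  (forall a, is_play g (tau a)) /\
  (forall a, lam (tau a) a) /\
  (forall a b, gaifman_adj a b -> exists c, lam (tau c) a /\ lam (tau c) b) /\
  (forall a q, is_play g q -> lam q a ->
     fclass g (tau a) a = fclass g q a -> prefix (tau a) q) /\
  (forall a q, is_play g q -> (exists b, prefix q (tau b)) -> lam q a ->
     fclass g (tau a) a = fclass g q a).

Definition maximal_guarded (g : guarding) (X : A -> Prop) : Prop :=
  guarded g X /\ forall Y, guarded g Y -> subset X Y -> subset Y X.

End Guarded.

(* Main.v *)
Require Import Defs.
From Stdlib Require Import List.
From Stdlib Require Import FunctionalExtensionality PropExtensionality Classical_Prop Lia.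
Import ListNotations.
Set Implicit Arguments.

Lemma last_in' {T} (l : list T) d : l <> [] -> In (last l d) l.
Proof.
  induction l as [|x l IH]; [congruence|]. intros _.
  destruct l as [|y l]; [left; auto|]. right. apply IH. discriminate.
Qed.

Section S.
Variables (sg : signature) (M : structure sg) (g : guarding)
  (tau : carrier M -> list (carrier M -> Prop)).
Hypothesis hdec : guarded_decomposition M g tau.
Local Notation pre := (prefix M).

Lemma prefix_refl (p : list (carrier M -> Prop)) : pre p p.
Proof. exists []. now rewrite app_nil_r. Qed.

Lemma prefix_trans (p q r : list (carrier M -> Prop)) :
  pre p q -> pre q r -> pre p r.
Proof. intros [a ->] [b ->]. exists (a ++ b). now rewrite app_assoc. Qed.

Lemma prefix_antisym (p q : list (carrier M -> Prop)) :
  pre p q -> pre q p -> p = q.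
Proof.
  intros [a Ha] [b Hb]. subst q. rewrite <- app_assoc in Hb.
  assert (E : length (a ++ b) = 0).
  { apply (f_equal (@length _)) in Hb. rewrite length_app in Hb. lia. }
  destruct a; [now rewrite app_nil_r | simpl in E; discriminate].
Qed.

Lemma key x c : lam M (tau c) x ->
  pre (tau x) (tau c) /\
  forall u, pre (tau x) u -> pre u (tau c) -> lam M u x.
Proof.
  intros Hx. destruct hdec as (Hp & Hr & He & Hmin & Hvc).
  assert (Hcl : fclass M g (tau x) x = fclass M g (tau c) x).
  { apply Hvc; auto. exists c. apply prefix_refl. }
  assert (Hpre : pre (tau x) (tau c)) by (apply Hmin; auto).
  split; [exact Hpre|].
  assert (Hin : fclass M g (tau c) x (tau c, x)).
  { split. { split; simpl; auto. }
    simpl. split; auto. exists (tau c). split.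
    { split; [apply prefix_refl|]. split; [apply prefix_refl|]. auto. }
    split; [apply (Hp c)|].
    split; intros u H1 H2; rewrite <- (prefix_antisym H1 H2); auto. }
  rewrite <- Hcl in Hin. destruct Hin as [_ [_ [m [[Hm1 [Hm2 Hm3]] [_ [_ Hm]]]]]].
  intros u H1 H2. apply Hm; auto. apply prefix_trans with (tau x); auto.
Qed.


Lemma comparable x y : x = y \/ gaifman_adj M x y ->
  pre (tau x) (tau y) \/ pre (tau y) (tau x).
Proof.
  intros [->|Hadj]; [left; apply prefix_refl|].
  destruct hdec as (Hp & Hr & He & Hmin & Hvc).
  destruct (He _ _ Hadj) as [c [H1 H2]].
  destruct (key _ _ H1) as [P1 _]. destruct (key _ _ H2) as [P2 _].
  destruct P1 as [r1 E1]. destruct P2 as [r2 E2]. rewrite E1 in E2.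
  destruct (app_eq_app _ _ _ _ E2) as [l [[F1 F2]|[F1 F2]]].
  - right. exists l. auto.
  - left. exists l. auto.
Qed.

Lemma maxelt (X : carrier M -> Prop) :
  (forall a b, X a -> X b -> a <> b -> gaifman_adj M a b) ->
  forall l : list (carrier M),
  (forall x, In x l -> ~ X x) \/
  (exists a, X a /\ forall x, In x l -> X x -> pre (tau x) (tau a)).
Proof.
  intros Hc. induction l as [|y l IH].
  - left. intros x [].
  - destruct (Classical_Prop.classic (X y)) as [Hy|Hy].
    + destruct IH as [IH|[a [Ha IH]]].
      * right. exists y. split; auto. intros x [<-|Hx] HX.
        -- apply prefix_refl.
        -- exfalso; eapply IH; eauto.
      * destruct (Classical_Prop.classic (y = a)) as [E|E].
        { subst. right. exists a. split; auto. intros x [<-|Hx] HX; auto. apply prefix_refl. }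
        destruct (comparable (or_intror (Hc _ _ Hy Ha E))) as [P|P].
        -- right. exists a. split; auto. intros x [<-|Hx] HX; auto.
        -- right. exists y. split; auto. intros x [<-|Hx] HX.
           ++ apply prefix_refl.
           ++ eapply prefix_trans; eauto.
    + destruct IH as [IH|[a [Ha IH]]].
      * left. intros x [<-|Hx]; auto.
      * right. exists a. split; auto. intros x [<-|Hx] HX; auto. contradiction.
Qed.

Lemma cover (X : carrier M -> Prop) : gaifman_clique M X ->
  (exists a, X a /\ subset X (lam M (tau a))) \/ (forall x, ~ X x).
Proof.
  intros [[l Hl] Hc]. destruct (maxelt _ Hc l) as [H|[a [Ha H]]].
  - right. intros x Hx. eapply H; eauto.
  - left. exists a. split; auto. intros x Hx.
    destruct hdec as (Hp & Hr & He & Hmin & Hvc).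
    destruct (Classical_Prop.classic (x = a)) as [->|E]; auto.
    destruct (He _ _ (Hc _ _ Hx Ha E)) as [c [H1 H2]].
    destruct (key _ _ H1) as [_ K]. apply K.
    + apply H; auto.
    + apply (proj1 (key _ _ H2)).
Qed.

Lemma lam_guarded b : guarded M g (lam M (tau b)).
Proof.
  destruct hdec as (Hp & _). destruct (Hp b) as [Hn Hg]. apply Hg.
  unfold lam. apply last_in'. auto.
Qed.

Lemma guarded_sub (X Y : carrier M -> Prop) :
  g <> CliqueGuarding -> guarded M g Y -> subset X Y -> guarded M g X.
Proof.
  intros Hg HY HXY. destruct g; simpl in *.
  - destruct HY as [[s [t [H1 H2]]]|[a Ha]].
    + left. exists s, t. split; auto.
    + right. exists a. auto.
  - destruct HY as [Z [H1 H2]]. exists Z. split; auto. intros x Hx; auto.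
  - congruence.
Qed.

Lemma guarded_clique (X : carrier M -> Prop) : guarded M g X -> gaifman_clique M X.
Proof.
  destruct g; simpl.
  - intros [[s [t [H1 H2]]]|[a Ha]].
    + split. { exists t. auto. }
      intros a b Ha Hb E. split; auto. exists s, t. auto.
    + split. { exists [a]. intros x Hx. left. symmetry. auto. }
      intros x y Hx Hy E. exfalso. apply E. rewrite (Ha _ Hx), (Ha _ Hy). auto.
  - intros [Y [H1 [[l Hl] H3]]]. split. { exists l. auto. }
    intros a b Ha Hb E. split; auto.
    destruct (H3 a b (H1 _ Ha) (H1 _ Hb) E) as [s [t [? [? [? _]]]]].
    exists s, t. auto.
  - auto.
Qed.

End S.

Theorem proposition4p4 (sg : signature) (M : structure sg)
  (g : guarding) (tau : carrier M -> list (carrier M -> Prop))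
  (hne : inhabited (carrier M))
  (hdec : guarded_decomposition M g tau) :
  (forall X, maximal_guarded M g X -> exists b, X = lam M (tau b)) /\
  (forall X, gaifman_clique M X -> guarded M g X).
Proof.
  destruct hne as [b0]. split.
  - intros X [HX Hmax].
    destruct (cover hdec (guarded_clique hdec _ HX)) as [[a [Ha Hs]]|H].
    + exists a. apply functional_extensionality. intros x.
      apply propositional_extensionality. split; [apply Hs|].
      apply (Hmax _ (lam_guarded hdec a) Hs).
    + exfalso. apply (H b0).
      apply (Hmax _ (lam_guarded hdec b0)).
      * intros x Hx. exfalso. eapply H; eauto.
      * destruct hdec as (_ & Hr & _). apply Hr.
  - intros X HX. destruct g eqn:Eg; [| | exact HX];
    (destruct (cover hdec HX) as [[a [Ha Hs]]|H];
     [ apply (guarded_sub hdec) with (lam M (tau a)); [discriminate| apply lam_guarded; auto | auto]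
     | apply (guarded_sub hdec) with (lam M (tau b0)); [discriminate| apply lam_guarded; auto |
        intros x Hx; exfalso; eapply H; eauto]]).
Qed.
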